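(* Let $n$, $U=U_{n+1}$, the bases $E_{\mathcal M}$, $F^{\mathcal M}$, the elements $E_{\mathcal M_1\cdots\mathcal M_k}$, $F^{\mathcal N_1\cdots\mathcal N_k}$ and the projectors $\mathbb{P}_k$ be as in the context, and let $p\ge2$ be an integer. Suppose there are real numbers $a_k$ ($k=2,3,\dots,p$) such that $$\langle E_{\mathcal M_1\cdots\mathcal M_k}|F^{\mathcal N_1\cdots\mathcal N_k}\rangle=a_k(\mathbb{P}_k)_{\mathcal M_1\cdots\mathcal M_k}{}^{\mathcal N_1\cdots\mathcal N_k}$$ for all indices and all $k=2,\dots,p$, and put $a_1=1$. Then, for all indices (with summation over repeated indices), (i) $[\![E_{\mathcal M},F^{\mathcal N_1\cdots\mathcal N_p}]\!]=(-1)^p\frac{a_p}{a_{p-1}}(\mathbb{P}_p)_{\mathcal M\mathcal M_2\cdots\mathcal M_p}{}^{\mathcal N_1\cdots\mathcal N_p}F^{\mathcal M_2\cdots\mathcal M_p}$; (ii) $[\![E_{\mathcal M_2\cdots\mathcal M_p},F^{\mathcal N_1\cdots\mathcal N_p}]\!]=a_p(\mathbb{P}_p)_{\mathcal M_1\mathcal M_2\cdots\mathcal M_p}{}^{\mathcal N_1\cdots\mathcal N_p}F^{\mathcal M_1}$; (iii) $[\![E_{\mathcal M_1\cdots\mathcal M_p},F^{\mathcal N_1\cdots\mathcal N_p}]\!]=a_p(\mathbb{P}_p)_{\mathcal M_1\cdots\mathcal M_p}{}^{\mathcal K_1\cdots\mathcal K_p}\sum_{i=1}^p\delta_{\mathcal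 K_1}{}^{\mathcal N_1}\cdots\delta_{\mathcal K_{i-1}}{}^{\mathcal N_{i-1}}\{E_{\mathcal K_i},F^{\mathcal N_i}\}\delta_{\mathcal K_{i+1}}{}^{\mathcal N_{i+1}}\cdots\delta_{\mathcal K_p}{}^{\mathcal N_p}$. (For $p=2$, $F^{\mathcal M_2\cdots\mathcal M_p}$ means $F^{\mathcal M_2}$ and $E_{\mathcal M_2\cdots\mathcal M_p}$ means $E_{\mathcal M_2}$.)
   Context: Fix an integer $n$ with $4\le n\le 8$. $E_n$ denotes the split real Lie algebra with Dynkin diagram on nodes $1,\dots,n$, where nodes $1,\dots,n-1$ form a chain and node $n$ is joined to node $n-3$. Extend this diagram by a node $0$ joined to node $1$, and let $A=(A_{IJ})_{I,J=0,\dots,n}$ with $A_{00}=0$, $A_{ii}=2$ for $i\ge1$, $A_{IJ}=-1$ if $I\neq J$ are joined and $0$ otherwise. Let $\tilde U$ be the real Lie superalgebra generated by $e_I,f_I,h_I$ ($I=0,\dots,n$), all even except $e_0,f_0$ which are odd, subject to $[\![h_I,e_J]\!]=A_{IJ}e_J$, $[\![h_I,f_J]\!]=-A_{IJ}f_J$, $[\![e_I,f_J]\!]=\delta_{IJ}h_J$, $[\![h_I,h_J]\!]=0$, where $[\![x,y]\!]$ is the superbracket (written $\{x,y\}$ when both are odd, where it is symmetric, and $[x,y]$ otherwise). $U=U_{n+1}$ is the quotient of $\tilde U$ by its maximal ideal intersecting $\mathrm{span}\{h_I\}$ trivially (equivalently by the ideal generated by $(\mathrm{ad}\,e_i)^{1-A_{iJ}}(e_J)$,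 $(\mathrm{ad}\,f_i)^{1-A_{iJ}}(f_J)$, $i=1,\dots,n$, $J=0,\dots,n$). $U=\bigoplus_p U_p$ is $\mathbb{Z}$-graded with $e_0\in U_{-1}$, $f_0\in U_1$, all other generators in $U_0$; $U_p$ has parity $p\bmod 2$ and $[\![U_p,U_q]\!]\subseteq U_{p+q}$. The subalgebra generated by $e_i,f_i,h_i$ ($i\ge1$) is $E_n$, and each $U_p$ is an $E_n$-module. $U$ carries an invariant, supersymmetric bilinear form $\langle\cdot|\cdot\rangle$ with $\langle U_p|U_q\rangle=0$ unless $p+q=0$, $\langle h_I|h_J\rangle=A_{IJ}$, $\langle e_I|f_J\rangle=\delta_{IJ}$, $\langle e_I|e_J\rangle=\langle f_I|f_J\rangle=0$. Choose bases $\{E_{\mathcal M}\}$ of $U_{-1}$ and $\{F^{\mathcal M}\}$ of $U_1$ with $\langle E_{\mathcal M}|F^{\mathcal N}\rangle=\delta_{\mathcal M}{}^{\mathcal N}$. For $k\ge2$ set $E_{\mathcal M_1\cdots\mathcal M_k}=[\![E_{\mathcal M_1},[\![E_{\mathcal M_2},\ldots,[\![E_{\mathcal M_{k-1}},E_{\mathcal M_k}]\!]\cdots]\!]]\!]$ and $F^{\mathcal M_1\cdots\mathcal M_k}=[\![F^{\mathcal M_1},[\![F^{\mathcal M_2},\ldots,[\![F^{\mathcal M_{k-1}},F^{\mathcal M_k}]\!]\cdots]\!]]\!]$; these span $U_{-k}$ and $U_k$ respectively. For $k\ge2$, $\mathbb{P}_k$ is the projector onto the $E_n$-representation $U_{-k}$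 inside the $k$-fold tensor power of $U_{-1}$: an array $(\mathbb{P}_k)_{\mathcal M_1\cdots\mathcal M_k}{}^{\mathcal N_1\cdots\mathcal N_k}$, idempotent as a matrix, such that $E_{\mathcal M_1\cdots\mathcal M_k}=(\mathbb{P}_k)_{\mathcal M_1\cdots\mathcal M_k}{}^{\mathcal N_1\cdots\mathcal N_k}E_{\mathcal N_1\cdots\mathcal N_k}$ and $F^{\mathcal N_1\cdots\mathcal N_k}=(\mathbb{P}_k)_{\mathcal M_1\cdots\mathcal M_k}{}^{\mathcal N_1\cdots\mathcal N_k}F^{\mathcal M_1\cdots\mathcal M_k}$. Repeated indices are summed. *)

(* Defs.v *)
(* Abstract axiomatic description of the Lie superalgebra
   U = U_{n+1} of the paper, characterised up to isomorphism by its
   presentation (generators + relations + maximality of the quotient). *)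
From HB Require Import structures.
From mathcomp Require Import all_boot all_order all_algebra.
From mathcomp Require Import reals.
Set Implicit Arguments. Unset Strict Implicit. Unset Printing Implicit Defensive.
Import Order.TTheory GRing.Theory Num.Theory.
Local Open Scope ring_scope.

(* ---------- The matrix A (extended E_n Dynkin diagram, nodes 0..n) ------- *)
Definition dyn_edge (n a b : nat) : bool :=
  [|| (a == 0%N) && (b == 1%N),
      (1 <= a)%N && (b == a.+1) && (b <= n.-1)%N
    | (a == n - 3)%N && (b == n)].

Definition joined (n a b : nat) : bool :=
  (a != b) && (dyn_edge n a b || dyn_edge n b a).

Definition cartanA (R : nzRingType) (n : nat) (I J : 'I_n.+1) : R :=
  if I == J then (if val I == 0%N then 0 else 2)
  else if joined n I J then -1 else 0.

Section Super.
Variables (R : nzRingType) (V : lmodType R).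

Definition is_subspace (S : V -> Prop) : Prop :=
  S 0 /\ forall (a : R) x y, S x -> S y -> S (a *: x + y).

Definition sgn (p q : int) : R := (-1) ^+ (odd `|p|%N && odd `|q|%N).

Definition graded_space (G : int -> V -> Prop) : Prop :=
  [/\ forall p, is_subspace (G p),
      forall v, exists (s : seq int) (c : int -> V),
          (forall p, G p (c p)) /\ v = \sum_(p <- s) c p
    & forall (s : seq int) (c : int -> V), uniq s -> (forall p, G p (c p)) ->
          \sum_(p <- s) c p = 0 -> forall p, p \in s -> c p = 0].

Definition bilinear_br (br : V -> V -> V) : Prop :=
  (forall (a : R) x y z, br (a *: x + y) z = a *: br x z + br y z) /\
  (forall (a : R) x y z, br z (a *: x + y) = a *: br z x + br z y).

(* Z-graded Lie superalgebra whose Z_2-grading is the degree mod 2;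
   br is the superbracket [[_,_]] *)
Definition graded_lie_superalgebra (G : int -> V -> Prop) (br : V -> V -> V)
  : Prop :=
  [/\ graded_space G, bilinear_br br,
      forall p q x y, G p x -> G q y -> G (p + q) (br x y),
      forall p q x y, G p x -> G q y -> br x y = - (sgn p q *: br y x)
    & forall p q x y z, G p x -> G q y ->
        br x (br y z) = br (br x y) z + sgn p q *: br y (br x z)].

Definition is_ideal (br : V -> V -> V) (I : V -> Prop) : Prop :=
  is_subspace I /\ forall x y, I y -> I (br x y).

Definition invariant_form (G : int -> V -> Prop) (br : V -> V -> V)
  (form : V -> V -> R) : Prop :=
  [/\ (forall (a : R) x y z, form (a *: x + y) z = a * form x z + form y z),
      (forall (a : R) x y z, form z (a *: x + y) = a * form z x + form z y),
      (forall x y z, form (br x y) z = form x (br y z)),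
      (forall p q x y, G p x -> G q y -> form x y = sgn p q * form y x)
    & (forall p q x y, G p x -> G q y -> p + q != 0 -> form x y = 0)].

Fixpoint itbr (d : nat) (br : V -> V -> V) (X : 'I_d -> V) (s : seq 'I_d) : V :=
  match s with
  | [::] => 0
  | [:: m] => X m
  | m :: s' => br (X m) (itbr br X s')
  end.
End Super.

(* The conditions
   below characterise (V, br) up to isomorphism as the quotient of the
   free superalgebra tilde U by its maximal ideal meeting span{h_I} trivially. *)
Definition is_U (R : nzRingType) (V : lmodType R) (n : nat)
  (G : int -> V -> Prop) (br : V -> V -> V) (e f h : 'I_n.+1 -> V) : Prop :=
  [/\ graded_lie_superalgebra G br,
      [/\ G (-1) (e ord0), G 1 (f ord0),
          forall i : 'I_n.+1, val i != 0%N -> G 0 (e i) /\ G 0 (f i)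
        & forall I, G 0 (h I)],
      [/\ forall I J, br (h I) (e J) = cartanA R I J *: e J,
          forall I J, br (h I) (f J) = - (cartanA R I J *: f J),
          forall I J, br (e I) (f J) = (I == J)%:R *: h J
        & forall I J, br (h I) (h J) = 0],
      ((forall S : V -> Prop, is_subspace S ->
         (forall I, [/\ S (e I), S (f I) & S (h I)]) ->
         (forall x y, S x -> S y -> S (br x y)) -> forall v, S v) /\
      (forall c : 'I_n.+1 -> R, \sum_I c I *: h I = 0 -> forall I, c I = 0))
    & (* quotient by the maximal ideal meeting span{h_I} trivially:
         no nonzero ideal meets span{h_I} trivially *)
      (forall Id : V -> Prop, is_ideal br Id ->
         (forall v, Id v -> (exists c : 'I_n.+1 -> R, v = \sum_I c I *: h I) ->
                    v = 0) ->
         forall v, Id v -> v = 0)].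

Definition is_U_form (R : nzRingType) (V : lmodType R) (n : nat)
  (G : int -> V -> Prop) (br : V -> V -> V) (e f h : 'I_n.+1 -> V)
  (form : V -> V -> R) : Prop :=
  [/\ invariant_form G br form,
      forall I J, form (h I) (h J) = cartanA R I J,
      forall I J, form (e I) (f J) = (I == J)%:R,
      forall I J, form (e I) (e J) = 0
    & forall I J, form (f I) (f J) = 0].

Definition is_basis_of (R : nzRingType) (V : lmodType R) (d : nat)
  (S : V -> Prop) (X : 'I_d -> V) : Prop :=
  [/\ forall M, S (X M),
      forall v, S v -> exists c : 'I_d -> R, v = \sum_M c M *: X M
    & forall c : 'I_d -> R, \sum_M c M *: X M = 0 -> forall M, c M = 0].

Definition is_projector (R : nzRingType) (V : lmodType R) (d k : nat)
  (br : V -> V -> V) (E F : 'I_d -> V)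
  (P : k.-tuple 'I_d -> k.-tuple 'I_d -> R) : Prop :=
  [/\ forall M N : k.-tuple 'I_d,
        \sum_(L : k.-tuple 'I_d) P M L * P L N = P M N,
      forall M : k.-tuple 'I_d,
        itbr br E M = \sum_(N : k.-tuple 'I_d) P M N *: itbr br E N
    & forall N : k.-tuple 'I_d,
        itbr br F N = \sum_(M : k.-tuple 'I_d) P M N *: itbr br F M].

(* Main.v *)
Require Import Defs.
From HB Require Import structures.
From mathcomp Require Import all_boot all_order all_algebra.
From mathcomp Require Import reals.
From mathcomp Require Import lra zify ring.
Import Order.TTheory GRing.Theory Num.Theory.
Local Open Scope ring_scope.
Set Implicit Arguments. Unset Strict Implicit. Unset Printing Implicit Defensive.

Section Lin.
Variables (R : realType) (V : lmodType R).

Definition lin (W : lmodType R) (phi : V -> W) :=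
  forall a y z, phi (a *: y + z) = a *: phi y + phi z.
Definition linR (phi : V -> R) :=
  forall a y z, phi (a *: y + z) = a * phi y + phi z.

Section L.
Variables (W : lmodType R) (phi : V -> W) (Hl : lin phi).
Lemma lin0 : phi 0 = 0.
Proof. have := Hl (-1) 0 0; rewrite scaler0 addr0 scaleN1r => /eqP.
by rewrite addNr => /eqP. Qed.
Lemma linD y z : phi (y + z) = phi y + phi z.
Proof. by have := Hl 1 y z; rewrite !scale1r. Qed.
Lemma linZ a y : phi (a *: y) = a *: phi y.
Proof. by rewrite -[a *: y]addr0 Hl lin0 addr0. Qed.
Lemma linN y : phi (- y) = - phi y.
Proof. by rewrite -scaleN1r linZ scaleN1r. Qed.
Lemma linB y z : phi (y - z) = phi y - phi z.
Proof. by rewrite linD linN. Qed.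
Lemma lin_sum (I : Type) (r : seq I) (P : pred I) (g : I -> V) :
  phi (\sum_(i <- r | P i) g i) = \sum_(i <- r | P i) phi (g i).
Proof. elim/big_rec2: _ => [|i x y _ <-]; [exact: lin0 | by rewrite linD]. Qed.
End L.

Section LR.
Variables (phi : V -> R) (Hl : linR phi).
Lemma linR0 : phi 0 = 0.
Proof. have := Hl (-1) 0 0; rewrite scaler0 addr0 mulN1r => /eqP.
by rewrite addNr => /eqP. Qed.
Lemma linRD y z : phi (y + z) = phi y + phi z.
Proof. by have := Hl 1 y z; rewrite scale1r mul1r. Qed.
Lemma linRZ a y : phi (a *: y) = a * phi y.
Proof. by rewrite -[a *: y]addr0 Hl linR0 addr0. Qed.
Lemma linRN y : phi (- y) = - phi y.
Proof. by rewrite -scaleN1r linRZ mulN1r. Qed.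
Lemma linRB y z : phi (y - z) = phi y - phi z.
Proof. by rewrite linRD linRN. Qed.
Lemma linR_sum (I : Type) (r : seq I) (P : pred I) (g : I -> V) :
  phi (\sum_(i <- r | P i) g i) = \sum_(i <- r | P i) phi (g i).
Proof. elim/big_rec2: _ => [|i x y _ <-]; [exact: linR0 | by rewrite linRD]. Qed.
End LR.

Lemma sub_sum (S : V -> Prop) (HS : is_subspace S) (I : Type) (r : seq I)
  (P : pred I) (g : I -> V) :
  (forall i, P i -> S (g i)) -> S (\sum_(i <- r | P i) g i).
Proof.
case: HS => S0 Sl Hg; elim/big_rec: _ => // i x Pi Sx.
by rewrite -[g i]scale1r; apply: Sl => //; apply: Hg.
Qed.
Lemma subZ (S : V -> Prop) (HS : is_subspace S) a x : S x -> S (a *: x).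
Proof. case: HS => S0 Sl Sx; by rewrite -[_ *: _]addr0; apply: Sl. Qed.
Lemma subD (S : V -> Prop) (HS : is_subspace S) x y : S x -> S y -> S (x + y).
Proof. case: HS => S0 Sl Sx Sy; by rewrite -[x]scale1r; apply: Sl. Qed.
Lemma subB (S : V -> Prop) (HS : is_subspace S) x y : S x -> S y -> S (x - y).
Proof. move=> Sx Sy; apply: subD => //; rewrite -scaleN1r; exact: subZ. Qed.
End Lin.

Definition cn (n i j : nat) : int :=
  if i == j then (if i == 0%N then 0 else 2) else if joined n i j then -1 else 0.

Lemma cartan_cn (R : realType) n (I J : 'I_n.+1) : cartanA R I J = (cn n I J)%:~R.
Proof. rewrite /cartanA /cn -(inj_eq val_inj) /=.
by case: ifP => _; [case: ifP|case: ifP] => _ //=; rewrite ?rmorphN ?rmorph1. Qed.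

Lemma cart_gen (R : realType) n (c : 'I_n.+1 -> R) :
  (forall J : 'I_n.+1, \sum_(I < n.+1) c I * cartanA R I J = 0) ->
  forall j, (j < n.+1)%N -> \sum_(0 <= i < n.+1) c (inord i) * (cn n i j)%:~R = 0.
Proof.
move=> H j hj; rewrite -[RHS](H (inord j)) big_mkord; apply: eq_bigr => i _.
by rewrite inord_val cartan_cn inordK.
Qed.

Lemma cart_nondeg (R : realType) n : (4 <= n <= 8)%N ->
  forall c : 'I_n.+1 -> R,
  (forall J : 'I_n.+1, \sum_(I < n.+1) c I * cartanA R I J = 0) -> forall I, c I = 0.
Proof.
case: n => [|[|[|[|[|[|[|[|[|n]]]]]]]]] // _.
- move=> c H.
  have H' := @cart_gen R 4 c H.
  have e0 := H' 0%N isT. have e1 := H' 1%N isT. have e2 := H' 2%N isT. have e3 := H' 3%N isT. have e4 := H' 4%N isT.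
  move: e0 e1 e2 e3 e4.
  rewrite !big_nat_recl // ?big_geq //= /cn /=.
  rewrite ?mulr0 ?mulrN1 ?mulr1 ?add0r ?addr0 ?big_geq // ?addr0.
  move=> e0 e1 e2 e3 e4 I.
  rewrite -(inord_val I); have := ltn_ord I; move: (nat_of_ord I) => k.
  do 5 (case: k => [_|k]; first by lra).
  by [].
- move=> c H.
  have H' := @cart_gen R 5 c H.
  have e0 := H' 0%N isT. have e1 := H' 1%N isT. have e2 := H' 2%N isT. have e3 := H' 3%N isT. have e4 := H' 4%N isT. have e5 := H' 5%N isT.
  move: e0 e1 e2 e3 e4 e5.
  rewrite !big_nat_recl // ?big_geq //= /cn /=.
  rewrite ?mulr0 ?mulrN1 ?mulr1 ?add0r ?addr0 ?big_geq // ?addr0.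
  move=> e0 e1 e2 e3 e4 e5 I.
  rewrite -(inord_val I); have := ltn_ord I; move: (nat_of_ord I) => k.
  do 6 (case: k => [_|k]; first by lra).
  by [].
- move=> c H.
  have H' := @cart_gen R 6 c H.
  have e0 := H' 0%N isT. have e1 := H' 1%N isT. have e2 := H' 2%N isT. have e3 := H' 3%N isT. have e4 := H' 4%N isT. have e5 := H' 5%N isT. have e6 := H' 6%N isT.
  move: e0 e1 e2 e3 e4 e5 e6.
  rewrite !big_nat_recl // ?big_geq //= /cn /=.
  rewrite ?mulr0 ?mulrN1 ?mulr1 ?add0r ?addr0 ?big_geq // ?addr0.
  move=> e0 e1 e2 e3 e4 e5 e6 I.
  rewrite -(inord_val I); have := ltn_ord I; move: (nat_of_ord I) => k.
  do 7 (case: k => [_|k]; first by lra).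
  by [].
- move=> c H.
  have H' := @cart_gen R 7 c H.
  have e0 := H' 0%N isT. have e1 := H' 1%N isT. have e2 := H' 2%N isT. have e3 := H' 3%N isT. have e4 := H' 4%N isT. have e5 := H' 5%N isT. have e6 := H' 6%N isT. have e7 := H' 7%N isT.
  move: e0 e1 e2 e3 e4 e5 e6 e7.
  rewrite !big_nat_recl // ?big_geq //= /cn /=.
  rewrite ?mulr0 ?mulrN1 ?mulr1 ?add0r ?addr0 ?big_geq // ?addr0.
  move=> e0 e1 e2 e3 e4 e5 e6 e7 I.
  rewrite -(inord_val I); have := ltn_ord I; move: (nat_of_ord I) => k.
  do 8 (case: k => [_|k]; first by lra).
  by [].
- move=> c H.
  have H' := @cart_gen R 8 c H.
  have e0 := H' 0%N isT. have e1 := H' 1%N isT. have e2 := H' 2%N isT. have e3 := H' 3%N isT. have e4 := H' 4%N isT. have e5 := H' 5%N isT. have e6 := H' 6%N isT. have e7 := H' 7%N isT. have e8 := H' 8%N isT.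
  move: e0 e1 e2 e3 e4 e5 e6 e7 e8.
  rewrite !big_nat_recl // ?big_geq //= /cn /=.
  rewrite ?mulr0 ?mulrN1 ?mulr1 ?add0r ?addr0 ?big_geq // ?addr0.
  move=> e0 e1 e2 e3 e4 e5 e6 e7 e8 I.
  rewrite -(inord_val I); have := ltn_ord I; move: (nat_of_ord I) => k.
  do 9 (case: k => [_|k]; first by lra).
  by [].
Qed.


Section Main.
Variables (R : realType) (V : lmodType R) (G : int -> V -> Prop) (br : V -> V -> V)
  (form : V -> V -> R).
Hypothesis HL : graded_lie_superalgebra G br.
Hypothesis Hinv : invariant_form G br form.

Lemma Gsub p : is_subspace (G p).
Proof. by case: HL => [[]]. Qed.
Lemma G0 p : G p 0. Proof. by case: (Gsub p). Qed.
Lemma GD p x y : G p x -> G p y -> G p (x + y).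
Proof. exact: (@subD R V (G p) (Gsub p)). Qed.
Lemma GZ p a x : G p x -> G p (a *: x).
Proof. exact: (@subZ R V (G p) (Gsub p)). Qed.
Lemma GB p x y : G p x -> G p y -> G p (x - y).
Proof. exact: (@subB R V (G p) (Gsub p)). Qed.
Lemma Gsum p (I : Type) (r : seq I) (Pr : pred I) (g : I -> V) :
  (forall i, Pr i -> G p (g i)) -> G p (\sum_(i <- r | Pr i) g i).
Proof. exact: (@sub_sum R V (G p) (Gsub p)). Qed.
Lemma Geq p p' x : p = p' -> G p x -> G p' x. Proof. by move->. Qed.
Lemma Gbr p q x y : G p x -> G q y -> G (p + q) (br x y).
Proof. by case: HL => _ _ H _ _; apply: H. Qed.
Lemma anti p q x y : G p x -> G q y -> br x y = - (sgn R p q *: br y x).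
Proof. by case: HL => _ _ _ H _; apply: H. Qed.
Lemma jac p q x y z : G p x -> G q y ->
        br x (br y z) = br (br x y) z + sgn R p q *: br y (br x z).
Proof. by case: HL => _ _ _ _ H; apply: H. Qed.
Lemma brl z : lin (fun x => br x z).
Proof. by case: HL => _ [H _] _ _ _ a x y; apply: H. Qed.
Lemma brr z : lin (br z).
Proof. by case: HL => _ [_ H] _ _ _ a x y; apply: H. Qed.
Lemma forml z : linR (fun x => form x z).
Proof. by case: Hinv => H _ _ _ _ a x y; apply: H. Qed.
Lemma formr z : linR (form z).
Proof. by case: Hinv => _ H _ _ _ a x y; apply: H. Qed.
Lemma form_inv x y z : form (br x y) z = form x (br y z).
Proof. by case: Hinv => _ _ H _ _; apply: H. Qed.
Lemma form_deg p q x y : G p x -> G q y -> p + q != 0 -> form x y = 0.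
Proof. by case: Hinv => _ _ _ _ H; apply: H. Qed.

Lemma sgn0l q : sgn R 0 q = 1. Proof. by rewrite /sgn. Qed.
Lemma sgn0r q : sgn R q 0 = 1. Proof. by rewrite /sgn andbF. Qed.

Fixpoint itl (s : seq V) : V :=
  match s with
  | [::] => 0
  | [:: v] => v
  | v :: s' => br v (itl s')
  end.

Lemma itl_cons v s : s != [::] -> itl (v :: s) = br v (itl s).
Proof. by case: s. Qed.

Lemma itbr_itl d (X : 'I_d -> V) (s : seq 'I_d) : itbr br X s = itl (map X s).
Proof.
elim: s => [|m s IH] //; case: s IH => [|m' s] IH //.
by rewrite [LHS]/= -/(itbr br X (m' :: s)) IH.
Qed.

Lemma itbr_cons d (X : 'I_d -> V) m (s : seq 'I_d) : s != [::] ->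
  itbr br X (m :: s) = br (X m) (itbr br X s).
Proof. by case: s. Qed.

Lemma itl_deg (c : int) s : s != [::] -> (forall v, v \in s -> G c v) ->
  G (c * (size s)%:Z) (itl s).
Proof.
elim: s => [|v [|w s] IH] // _ Hs.
  by rewrite /= mulr1; apply: Hs; rewrite inE.
rewrite itl_cons //; apply: (Geq _ (Gbr (Hs v _) (IH _ _))) => //.
- by rewrite /= [in RHS]intS mulrDr mulr1.
- by rewrite in_cons eqxx.
- by move=> u Hu; apply: Hs; rewrite in_cons Hu orbT.
Qed.

Inductive W : nat -> V -> Prop :=
| W1 v : G (-1) v -> W 1 v
| Wbr k w z : G (-1) w -> W k z -> W k.+1 (br w z)
| Wadd k x y : W k x -> W k y -> W k (x + y)
| Wsc k a x : W k x -> W k (a *: x)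
| W0 k : W k.+1 0.

Lemma WG k x : W k x -> G (- (k%:Z)) x.
Proof.
elim=> {k x} [v Hv|k w z Hw _ Hz|k x y _ Hx _ Hy|k a x _ Hx|k] //.
- by apply: (Geq _ (Gbr Hw Hz)); rewrite intS opprD.
exact: GD.
- exact: GZ.
- exact: G0.
Qed.

Lemma Wpos k x : W k x -> (0 < k)%N.
Proof. by elim. Qed.

Lemma Weq k k' x : k = k' -> W k x -> W k' x. Proof. by move->. Qed.

Lemma Wsum k (I : Type) (r : seq I) (Pr : pred I) (g : I -> V) :
  (0 < k)%N -> (forall i, Pr i -> W k (g i)) -> W k (\sum_(i <- r | Pr i) g i).
Proof.
case: k => // k _ Hg; elim/big_rec: _ => [|i x Pi Wx]; first exact: W0.
by apply: Wadd => //; apply: Hg.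
Qed.

Lemma WN k x : W k x -> W k (- x).
Proof. by move=> Wx; rewrite -scaleN1r; apply: Wsc. Qed.

Lemma L1 a x : W a x -> forall b y, W b y -> W (a + b) (br x y).
Proof.
elim=> {a x} [v Hv|k w z Hw Wz IH|k x1 x2 _ IH1 _ IH2|k c x _ IH|k] b y Wy.
- by rewrite add1n; apply: Wbr.
- have Gz := WG Wz.
  have -> : br (br w z) y = br w (br z y) - sgn R (-1) (- k%:Z) *: br z (br w y).
    by rewrite (jac y Hw Gz) addrK.
  apply: Wadd; first by rewrite addSn; apply: Wbr => //; apply: IH.
  apply: WN; apply: Wsc; rewrite addSnnS; apply: IH; exact: Wbr.
- by rewrite (linD (brl y)); apply: Wadd; [apply: IH1|apply: IH2].
- by rewrite (linZ (brl y)); apply: Wsc; apply: IH.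
- by rewrite (lin0 (brl y)); apply: W0.
Qed.

Lemma L2 b z : W b z -> forall (p : nat) g, G (p%:Z) g -> (p < b)%N ->
  W (b - p) (br g z).
Proof.
elim=> {b z} [v Hv|k w z Hw Wz IH|k x1 x2 _ IH1 _ IH2|k c x _ IH|k] p g Hg Hp.
- have -> : p = 0%N by lia.
  apply: W1; apply: (Geq _ (Gbr Hg Hv)); lia.
- rewrite (jac z Hg Hw); apply: Wadd.
  + case: p Hg Hp => [|p] Hg Hp.
      rewrite subn0 -add1n; apply: L1 Wz; apply: W1.
      by apply: (Geq _ (Gbr Hg Hw)).
    rewrite subSS; apply: IH; last by lia.
    by apply: (Geq _ (Gbr Hg Hw)); lia.
  + apply: Wsc; have [ltpk|] := ltnP p k.
      rewrite subSn; last by lia.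
      by apply: Wbr => //; apply: IH.
    move=> lekp; have -> : p = k by lia.
    rewrite subSnn; apply: W1; apply: (Geq _ (Gbr Hw (Gbr Hg (WG Wz)))).
    have -> : p = k by lia. lia.
- by rewrite (linD (brr g)); apply: Wadd; [apply: IH1|apply: IH2].
- by rewrite (linZ (brr g)); apply: Wsc; apply: IH.
- by rewrite (lin0 (brr g)) subSn; [apply: W0 | lia].
Qed.

Inductive Sg : V -> Prop :=
| Sgood (p : int) v : G p v -> (p < 0 -> W `|p|%N v) -> Sg v
| Sadd x y : Sg x -> Sg y -> Sg (x + y)
| Ssc a x : Sg x -> Sg (a *: x).

Lemma good_br p q x y : G p x -> (p < 0 -> W `|p|%N x) ->
  G q y -> (q < 0 -> W `|q|%N y) -> Sg (br x y).
Proof.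
move=> Gx Wx Gy Wy; apply: (Sgood (Gbr Gx Gy)) => Hpq.
case: p Gx Wx Hpq => [p|p] Gx Wx; case: q Gy Wy => [q|q] Gy Wy Hpq.
- exfalso; lia.
- have Wy' := Wy isT.
  apply: (Weq _ (L2 Wy' Gx _)); lia.
- have Wx' := Wx isT; rewrite (anti Gx Gy); apply: WN; apply: Wsc.
  apply: (Weq _ (L2 Wx' Gy _)); lia.
- apply: (Weq _ (L1 (Wx isT) (Wy isT))); lia.
Qed.

Lemma Sg_br x y : Sg x -> Sg y -> Sg (br x y).
Proof.
move=> Sx; elim: Sx y => {x} [p x Gx Wx|x1 x2 _ IH1 _ IH2|a x _ IH] y Sy.
- elim: Sy => {y} [q y Gy Wy|y1 y2 _ IH1 _ IH2|a y _ IH].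
  + exact: good_br Gx Wx Gy Wy.
  + by rewrite (linD (brr x)); apply: Sadd.
  + by rewrite (linZ (brr x)); apply: Ssc.
- by rewrite (linD (brl y)); apply: Sadd; [apply: IH1|apply: IH2].
- by rewrite (linZ (brl y)); apply: Ssc; apply: IH.
Qed.

Lemma Sg_list v : Sg v -> exists l : seq (int * V),
  (forall i, i \in l -> G i.1 i.2 /\ (i.1 < 0 -> W `|i.1|%N i.2)) /\
  v = \sum_(i <- l) i.2.
Proof.
elim=> {v} [p v Gv Wv|x y _ [l1 [H1 ->]] _ [l2 [H2 ->]]|a x _ [l [H ->]]].
- exists [:: (p, v)]; split; last by rewrite big_seq1.
  by move=> i; rewrite inE => /eqP ->.
- exists (l1 ++ l2); split; last by rewrite big_cat.
  by move=> i; rewrite mem_cat => /orP[/H1|/H2].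
- exists (map (fun i => (i.1, a *: i.2)) l); split.
    move=> i /mapP [j /H [Gj Wj] ->] /=; split; first exact: GZ.
    by move=> /Wj; apply: Wsc.
  by rewrite big_map scaler_sumr.
Qed.

Lemma sum_eq1 (T : eqType) (s : seq T) x : uniq s -> x \in s ->
  \sum_(p <- s) ((p == x)%:R : R) = 1.
Proof.
move=> us xs; transitivity ((count_mem x s)%:R : R); last by rewrite count_uniq_mem // xs.
by elim: s {us xs} => [|p s IH]; rewrite ?big_nil ?big_cons //= IH natrD.
Qed.

Hypothesis Hspan : forall v, Sg v.

Lemma comp k y : (0 < k)%N -> G (- k%:Z) y -> W k y.
Proof.
move=> k0 Gy; have [l [Hl Ey]] := Sg_list (Hspan y).
set s := undup (- k%:Z :: map fst l).
pose c p := \sum_(i <- l | i.1 == p) i.2 - ((p == - k%:Z)%:R : R) *: y.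
have Gc p : G p (c p).
  apply: GB.
    rewrite big_seq_cond; apply: Gsum => i /andP[il /eqP <-]; exact: (Hl i il).1.
  case: eqP => [->|_]; first exact: GZ.
  by rewrite scale0r; apply: G0.
have us : uniq s by apply: undup_uniq.
have sum0 : \sum_(p <- s) c p = 0.
  rewrite sumrB -scaler_suml sum_eq1 ?scale1r; last first.
  - by rewrite mem_undup in_cons eqxx.
  - exact: us.
  have -> : \sum_(p <- s) \sum_(i <- l | i.1 == p) i.2 =
            \sum_(p <- s) \sum_(i <- l) ((i.1 == p)%:R : R) *: i.2.
    apply: eq_bigr => p _; rewrite big_mkcond; apply: eq_bigr => i _.
    by case: eqP => _; rewrite ?scale1r ?scale0r.
  rewrite exchange_big /=.
  rewrite [X in X - _](_ : _ = \sum_(i <- l) i.2) -?Ey ?subrr //.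
rewrite Ey; apply: eq_big_seq => i il; rewrite -scaler_suml.
  under eq_bigr do rewrite eq_sym.
  by rewrite sum_eq1 ?scale1r // mem_undup in_cons map_f ?orbT.
case: HL => [[_ _ HD]] _ _ _ _; have := HD s c us Gc sum0 (- k%:Z).
rewrite mem_undup in_cons eqxx /= => /(_ isT) /eqP.
rewrite /c eqxx scale1r subr_eq0 => /eqP <-.
rewrite big_seq_cond; apply: Wsum => // i /andP[il /eqP Ei].
apply: (Weq _ ((Hl i il).2 _)); rewrite Ei; lia.
Qed.

Lemma sum_delta (T : finType) (c : T -> R) (L : T) :
  \sum_M c M * (L == M)%:R = c L.
Proof.
rewrite (bigD1 L) //= eqxx mulr1 big1 ?addr0 // => M /negbTE.
by rewrite eq_sym => ->; rewrite mulr0.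
Qed.

Lemma sum_delta' (T : finType) (c : T -> R) (L : T) :
  \sum_M c M * (M == L)%:R = c L.
Proof. by under eq_bigr do rewrite eq_sym; rewrite sum_delta. Qed.

Variables (d : nat) (E F : 'I_d -> V).
Hypotheses (HE : is_basis_of (G (-1)) E) (HF : is_basis_of (G 1) F)
  (HEF : forall M N, form (E M) (F N) = (M == N)%:R).
Hypothesis Hrad : forall v, (forall y, form y v = 0) -> v = 0.

Lemma itE_deg k (K : k.-tuple 'I_d) : (0 < k)%N -> G (- k%:Z) (itbr br E K).
Proof.
move=> k0; rewrite itbr_itl; apply: (Geq _ (itl_deg (c := -1) _ _)).
- by rewrite size_map size_tuple mulN1r.
- by case: K => [[|? ?] /= /eqP Hs] //; move: k0; rewrite -Hs.
- by move=> v /mapP [M _ ->]; case: HE.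
Qed.

Lemma itF_deg k (K : k.-tuple 'I_d) : (0 < k)%N -> G (k%:Z) (itbr br F K).
Proof.
move=> k0; rewrite itbr_itl; apply: (Geq _ (itl_deg (c := 1) _ _)).
- by rewrite size_map size_tuple mul1r.
- by case: K => [[|? ?] /= /eqP Hs] //; move: k0; rewrite -Hs.
- by move=> v /mapP [M _ ->]; case: HF.
Qed.

Lemma T k y : W k y -> forall x, G (k%:Z) x ->
  (forall K : k.-tuple 'I_d, form (itbr br E K) x = 0) -> form y x = 0.
Proof.
elim=> {k y} [v Hv|k w z Hw Wz IH|k x1 x2 _ IH1 _ IH2|k c x1 _ IH|k] x Gx HK.
- case: HE => _ Hsp _; have [c ->] := Hsp v Hv.
  rewrite (linR_sum (forml x)) big1 // => M _.
  by rewrite (linRZ (forml x)); have := HK [tuple M] => /= ->; rewrite mulr0.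
- have k0 := Wpos Wz.
  rewrite (anti Hw (WG Wz)) (linRN (forml x)) (linRZ (forml x)) form_inv.
  rewrite (IH (br w x)) ?mulr0 ?oppr0 //.
    by apply: (Geq _ (Gbr Hw Gx)); lia.
  move=> K; rewrite -form_inv (anti (itE_deg K k0) Hw).
  rewrite (linRN (forml x)) (linRZ (forml x)).
  case: HE => _ Hsp _; have [c ->] := Hsp w Hw.
  rewrite (lin_sum (brl _)) (linR_sum (forml x)) big1 ?mulr0 ?oppr0 // => M _.
  rewrite (linZ (brl _)) (linRZ (forml x)) -itbr_cons.
    by have := HK (cons_tuple M K) => /= ->; rewrite mulr0.
  by case: K => [[|? ?] /= /eqP Hs] //; move: k0; rewrite -Hs.
- by rewrite (linRD (forml x)) IH1 ?IH2 ?addr0.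
- by rewrite (linRZ (forml x)) IH ?mulr0.
- by rewrite (linR0 (forml x)).
Qed.

Lemma decomp_form x q : G q x -> (forall y, G (- q) y -> form y x = 0) -> x = 0.
Proof.
move=> Gx H; apply: Hrad => y.
case: HL => [[_ Hdec _]] _ _ _ _; have [s [c [Gc ->]]] := Hdec y.
rewrite (linR_sum (forml x)) big1 // => p _.
have [->|np] := eqVneq p (- q); first exact: H.
apply: (form_deg (Gc p) Gx); apply: contra np => /eqP Hpq.
by apply/eqP; rewrite -[p]addr0 -(subrr q) addrA Hpq add0r.
Qed.

Lemma ND k x : (0 < k)%N -> G (k%:Z) x ->
  (forall K : k.-tuple 'I_d, form (itbr br E K) x = 0) -> x = 0.
Proof.
move=> k0 Gx HK; apply: (decomp_form Gx) => y Gy.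
exact: T (comp k0 Gy) x Gx HK.
Qed.

Lemma exp1 x : G 1 x -> x = \sum_L form (E L) x *: F L.
Proof.
case: HF => _ Hsp _ /Hsp [c ->]; apply: eq_bigr => L _; congr (_ *: _).
rewrite (linR_sum (formr _)); under eq_bigr do rewrite (linRZ (formr _)) HEF.
by rewrite sum_delta.
Qed.

Lemma ND1 x : G 1 x -> (forall L, form (E L) x = 0) -> x = 0.
Proof.
move=> Gx H; rewrite (exp1 Gx) big1 // => L _; by rewrite H scale0r.
Qed.
Variables (P : forall k : nat, k.-tuple 'I_d -> k.-tuple 'I_d -> R)
  (q : nat) (a : nat -> R).
Arguments P : clear implicits.
Hypotheses (HP : forall k : nat, (2 <= k)%N -> is_projector br E F (P k))
  (Ha1 : a 1%N = 1)
  (Ha : forall k : nat, (2 <= k <= q.+2)%N ->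
        forall M N : k.-tuple 'I_d,
          form (itbr br E M) (itbr br F N) = a k * P k M N).

Lemma tuple_ne k (K : k.+1.-tuple 'I_d) : tval K != [::].
Proof. by case: K => [[|? ?]]. Qed.

Lemma part2 (M' : q.+1.-tuple 'I_d) (N : q.+2.-tuple 'I_d) :
  br (itbr br E M') (itbr br F N)
  = a q.+2 *: \sum_(M1 : 'I_d) P q.+2 (cons_tuple M1 M') N *: F M1.
Proof.
apply/eqP; rewrite -subr_eq0; apply/eqP; apply: ND1.
  apply: GB; first by apply: (Geq _ (Gbr (itE_deg M' _) (itF_deg N _))) => //; lia.
  by apply: GZ; apply: Gsum => M1 _; apply: GZ; case: HF.
move=> L; rewrite (linRB (formr _)) -form_inv -itbr_cons ?tuple_ne //.
have -> : L :: tval M' = tval (cons_tuple L M') by [].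
rewrite Ha //= (linRZ (formr _)) (linR_sum (formr _)).
under eq_bigr do rewrite (linRZ (formr _)) HEF.
by rewrite sum_delta subrr.
Qed.
Lemma form1 (K M : 1.-tuple 'I_d) :
  form (itbr br E K) (itbr br F M) = (K == M)%:R.
Proof.
case: K => [[|k0 [|? ?]] //= HK]; case: M => [[|m0 [|? ?]] //= HM].
have -> : (@Tuple 1 _ [:: k0] HK == @Tuple 1 _ [:: m0] HM) = (k0 == m0).
  by rewrite -val_eqE /= eqseq_cons andbT.
by rewrite HEF.
Qed.

Lemma sum_deltaV (T : finType) (v : T -> V) (L : T) :
  \sum_M (L == M)%:R *: v M = v L.
Proof.
rewrite (bigD1 L) //= eqxx scale1r big1 ?addr0 // => M /negbTE.
by rewrite eq_sym => ->; rewrite scale0r.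
Qed.

Lemma expE k (K : k.+1.-tuple 'I_d) : (k.+1 <= q.+2)%N -> a k.+1 != 0 ->
  itbr br E K = \sum_(M' : k.+1.-tuple 'I_d)
     (form (itbr br E K) (itbr br F M') / a k.+1) *: itbr br E M'.
Proof.
case: k K => [|k] K Hk Hak.
  under eq_bigr do rewrite form1 Ha1 divr1.
  by rewrite sum_deltaV.
have [_ HE2 _] := HP (k:=k.+2) isT; rewrite [in LHS]HE2; apply: eq_bigr => M' _.
by rewrite Ha // mulrAC mulfV // mul1r.
Qed.
Lemma sgn_neg k : - sgn R (- k%:Z) (-1) = (-1) ^+ k.+1.
Proof. by rewrite /sgn abszN absz_nat /= andbT signr_odd exprS mulN1r. Qed.

Lemma part1 (M : 'I_d) (N : q.+2.-tuple 'I_d) :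
  br (E M) (itbr br F N)
  = ((-1) ^+ q.+2 * (a q.+2 / a q.+1)) *:
    \sum_(M' : q.+1.-tuple 'I_d) P q.+2 (cons_tuple M M') N *: itbr br F M'.
Proof.
have GEM : G (-1) (E M) by case: HE.
have [a0|an0] := eqVneq (a q.+1) 0.
  have qp : (0 < q)%N.
    case: (posnP q) a0 => [->|//]. by rewrite Ha1 => /eqP; rewrite oner_eq0.
  rewrite a0 invr0 !mulr0 scale0r.
  case: N => [[|n0 s] Hs]; first by [].
  have Hs' : size s == q.+1 by [].
  have F0 : itbr br F (Tuple Hs') = 0.
    apply: (ND (k:=q.+1)) => //; first exact: itF_deg.
    by move=> K; rewrite Ha ?a0 ?mul0r //; lia.
have -> : itbr br F (Tuple Hs) = br (F n0) (itbr br F (Tuple Hs')).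
    change (itbr br F (n0 :: s) = br (F n0) (itbr br F s)).
    by rewrite itbr_cons //; apply: (tuple_ne (Tuple Hs')).
  by rewrite F0 (lin0 (brr _)) (lin0 (brr _)).
apply/eqP; rewrite -subr_eq0; apply/eqP; apply: (ND (k:=q.+1)) => //.
  apply: GB; first by apply: (Geq _ (Gbr GEM (itF_deg N _))) => //; lia.
  by apply: GZ; apply: Gsum => M' _; apply: GZ; apply: itF_deg.
move=> K.
rewrite (linRB (formr _)) -form_inv (anti (itE_deg K _) GEM) //.
rewrite (linRN (forml _)) (linRZ (forml _)) -itbr_cons ?tuple_ne //.
change (M :: tval K) with (tval (cons_tuple M K)); rewrite Ha; last by lia.
rewrite (linRZ (formr _)) (linR_sum (formr _)).
under eq_bigr do rewrite (linRZ (formr _)).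
set S := \sum_(M' : q.+1.-tuple 'I_d) _.
have key : a q.+2 * P q.+2 (cons_tuple M K) N = a q.+2 / a q.+1 * S.
  rewrite -Ha; last by lia.
  change (tval (cons_tuple M K)) with (M :: tval K); rewrite itbr_cons ?tuple_ne //.
  rewrite {1}(expE K _ an0) // (lin_sum (brr _)) (linR_sum (forml _)).
  rewrite /S mulr_sumr; apply: eq_bigr => M' _.
  rewrite (linZ (brr _)) (linRZ (forml _)) -itbr_cons ?tuple_ne //.
  change (M :: tval M') with (tval (cons_tuple M M')).
  rewrite (Ha _ (cons_tuple M M') N); last by lia.
  by ring.
by rewrite key -mulNr sgn_neg mulrA subrr.
Qed.
Lemma set_nth_ne (s : seq V) i y : set_nth 0 s i y != [::].
Proof. by case: s => [|x s]; case: i. Qed.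

Lemma itl_set_lin s i : (i < size s)%N -> lin (fun y => itl (set_nth 0 s i y)).
Proof.
elim: s i => [|v s IH] [|i] // Hi c y z.
- have E0 x : set_nth 0 (v :: s) 0 x = x :: s by [].
  rewrite !E0; case: s {IH Hi E0} => [|w s] //; rewrite (itl_cons (c *: y + z)) // (itl_cons y) // (itl_cons z) //.
  exact: (brl (itl (w :: s)) c y z).
- have E1 x : set_nth 0 (v :: s) i.+1 x = v :: set_nth 0 s i x by [].
  rewrite !E1 !itl_cons ?set_nth_ne // IH // (linD (brr v)) (linZ (brr v)) //.
Qed.

Lemma deriv u s : G 0 u -> (forall v, v \in s -> G 1 v) ->
  br u (itl s) = \sum_(0 <= i < size s) itl (set_nth 0 s i (br u (nth 0 s i))).
Proof.
move=> Gu; elim: s => [|v s IH] Hs.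
  by rewrite (lin0 (brr u)) big_geq.
case: s IH Hs => [|w s] IH Hs; first by rewrite big_nat1.
have Gv : G 1 v by apply: Hs; rewrite in_cons eqxx.
rewrite itl_cons // (jac (itl (w :: s)) Gu Gv) sgn0l scale1r IH; last first.
  by move=> x Hx; apply: Hs; rewrite in_cons Hx orbT.
rewrite [in RHS]big_nat_recl //; congr (_ + _).
rewrite (lin_sum (brr v)); apply: eq_bigr => i _.
by rewrite [set_nth _ _ _ _]/= itl_cons ?set_nth_ne.
Qed.

Definition upd k (N : k.-tuple 'I_d) (i : 'I_k) (L : 'I_d) : k.-tuple 'I_d :=
  [tuple (if j == i then L else tnth N j) | j < k].

Lemma map_upd k (N : k.-tuple 'I_d) (i : 'I_k) L :
  map F (upd N i L) = set_nth 0 (map F N) i (F L).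
Proof.
apply: (@eq_from_nth _ 0).
  rewrite size_set_nth (size_map F (upd N i L)) (size_map F N) !size_tuple; have := ltn_ord i; lia.
move=> j; rewrite (size_map F (upd N i L)) size_tuple => jk.
rewrite nth_set_nth /= (nth_map (tnth N i)) ?size_tuple ?card_ord //.
rewrite (nth_map (tnth N i)) ?size_tuple ?card_ord //.
rewrite -[j]/(nat_of_ord (Ordinal jk)) nth_mktuple -val_eqE /=.
by case: ifP => // _; rewrite (tnth_nth (tnth N i)).
Qed.

Lemma prod_bool (I : finType) (Pr : pred I) (b : I -> bool) :
  \prod_(j | Pr j) ((b j)%:R : R) = ([forall j, Pr j ==> b j])%:R.
Proof.
case: (boolP [forall j, _]) => [/forallP Hall|].
  by rewrite big1 // => j Pj; have := Hall j; rewrite Pj => /= ->.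
move/forallPn => [j]; rewrite negb_imply => /andP[Pj nbj].
by rewrite (bigD1 j) //= (negbTE nbj) mul0r.
Qed.

Lemma sel k (N : k.-tuple 'I_d) (i : 'I_k) (f : k.-tuple 'I_d -> R) :
  \sum_(K : k.-tuple 'I_d)
     (\prod_(j < k | j != i) ((tnth K j == tnth N j)%:R : R)) * f K
  = \sum_L f (upd N i L).
Proof.
transitivity (\sum_(K : k.-tuple 'I_d) \sum_L
   ((\prod_(j < k | j != i) ((tnth K j == tnth N j)%:R : R)) * f K)
     * (tnth K i == L)%:R).
  by apply: eq_bigr => K _; rewrite sum_delta.
rewrite exchange_big; apply: eq_bigr => L _.
rewrite -[RHS](sum_delta' f); apply: eq_bigr => K _.
rewrite prod_bool mulrAC -natrM mulnb; rewrite mulrC; congr (_ * _); congr (GRing.natmul _ _); congr nat_of_bool.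
rewrite eqEtuple; apply/andP/forallP => [[/forallP H1 /eqP H2] j|H].
  rewrite tnth_mktuple; case: ifP => [/eqP ->|ne]; first by rewrite H2.
  by have := H1 j; rewrite ne.
split.
  apply/forallP => j; apply/implyP => ne; have := H j.
  by rewrite tnth_mktuple (negbTE ne).
by have := H i; rewrite tnth_mktuple eqxx.
Qed.
Lemma HE1 M : G (-1) (E M). Proof. by case: HE. Qed.
Lemma HF1 M : G 1 (F M). Proof. by case: HF. Qed.

Lemma part3 (M N : q.+2.-tuple 'I_d) :
  br (itbr br E M) (itbr br F N)
  = a q.+2 *: \sum_(K : q.+2.-tuple 'I_d) P q.+2 M K *:
      \sum_(i < q.+2)
        (\prod_(j < q.+2 | j != i) (tnth K j == tnth N j)%:R) *:
          br (E (tnth K i)) (F (tnth N i)).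
Proof.
apply/eqP; rewrite -subr_eq0; apply/eqP; apply: (decomp_form (q:=0)).
  apply: GB; first by apply: (Geq _ (Gbr (itE_deg M _) (itF_deg N _))) => //; lia.
  apply: GZ; apply: Gsum => K _; apply: GZ; apply: Gsum => i _; apply: GZ.
  by apply: (Geq _ (Gbr (HE1 _) (HF1 _))).
move=> u Gu0; have Gu : G 0 u by rewrite -oppr0.
pose rho (L : 'I_d) (i : 'I_q.+2) := form (br u (E L)) (F (tnth N i)).
have HLs : form u (br (itbr br E M) (itbr br F N)) =
    a q.+2 * \sum_(i < q.+2) \sum_L P q.+2 M (upd N i L) * rho L i.
  rewrite -form_inv (anti Gu (itE_deg M _)) // sgn0l scale1r (linRN (forml _)).
  rewrite form_inv [itbr br F N]itbr_itl (deriv Gu); last first.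
    by move=> v /mapP [n _ ->]; case: HF.
  rewrite size_map size_tuple big_mkord (linR_sum (formr _)) -sumrN mulr_sumr.
  apply: eq_bigr => i _.
  have -> : nth 0 (map F N) i = F (tnth N i).
    by rewrite (nth_map (tnth N i)) ?size_tuple // -tnth_nth.
  have Hi : (i < size (map F N))%N by rewrite size_map size_tuple.
  have G1 : G 1 (br u (F (tnth N i))).
    by apply: (Geq _ (Gbr Gu (HF1 _))).
  rewrite [br u (F (tnth N i))](exp1 G1).
  rewrite (lin_sum (itl_set_lin Hi)) (linR_sum (formr _)) -sumrN mulr_sumr.
  apply: eq_bigr => L _.
  rewrite (linZ (itl_set_lin Hi)) (linRZ (formr _)) -map_upd -itbr_itl Ha; last by lia.
  rewrite -form_inv (anti (HE1 L) Gu) sgn0r scale1r (linRN (forml _)) /rho.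
  by ring.
have HRs : form u (a q.+2 *: \sum_(K : q.+2.-tuple 'I_d) P q.+2 M K *:
      \sum_(i < q.+2)
        (\prod_(j < q.+2 | j != i) (tnth K j == tnth N j)%:R) *:
          br (E (tnth K i)) (F (tnth N i))) =
    a q.+2 * \sum_(i < q.+2) \sum_L P q.+2 M (upd N i L) * rho L i.
  rewrite (linRZ (formr _)) (linR_sum (formr _)); congr (_ * _).
  under eq_bigr do rewrite (linRZ (formr _)) (linR_sum (formr _)) mulr_sumr.
  rewrite exchange_big; apply: eq_bigr => i _ /=.
  transitivity (\sum_(K : q.+2.-tuple 'I_d)
     (\prod_(j < q.+2 | j != i) ((tnth K j == tnth N j)%:R : R)) *
       (P q.+2 M K * rho (tnth K i) i)).
    apply: eq_bigr => K _; rewrite (linRZ (formr _)) -form_inv /rho; ring.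
  rewrite sel; apply: eq_bigr => L _.
  by rewrite /upd tnth_mktuple eqxx.
by rewrite (linRB (formr _)) HLs HRs subrr.
Qed.
End Main.

Lemma cartanA_sym (R : realType) n (I J : 'I_n.+1) : cartanA R I J = cartanA R J I.
Proof.
rewrite /cartanA eq_sym; case: eqP => [->|_] //.
by rewrite /joined eq_sym orbC.
Qed.

Unset Implicit Arguments.
Set Strict Implicit.

(* p = q.+2 >= 2 *)
Theorem theorem1 (R : realType) (n : nat) (Hn : (4 <= n <= 8)%N)
  (V : lmodType R) (G : int -> V -> Prop) (br : V -> V -> V)
  (e f h : 'I_n.+1 -> V) (form : V -> V -> R)
  (HU : is_U G br e f h) (Hform : is_U_form G br e f h form)
  (d : nat) (E F : 'I_d -> V)
  (HE : is_basis_of (G (-1)) E) (HF : is_basis_of (G 1) F)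
  (HEF : forall M N, form (E M) (F N) = (M == N)%:R)
  (P : forall k : nat, k.-tuple 'I_d -> k.-tuple 'I_d -> R)
  (HP : forall k : nat, (2 <= k)%N -> is_projector br E F (P k))
  (q : nat) (a : nat -> R) (Ha1 : a 1%N = 1)
  (Ha : forall k : nat, (2 <= k <= q.+2)%N ->
        forall M N : k.-tuple 'I_d,
          form (itbr br E M) (itbr br F N) = a k * P k M N) :
  [/\ (* (i) *)
      forall (M : 'I_d) (N : q.+2.-tuple 'I_d),
        br (E M) (itbr br F N)
        = ((-1) ^+ q.+2 * (a q.+2 / a q.+1)) *:
          \sum_(M' : q.+1.-tuple 'I_d) P q.+2 (cons_tuple M M') N *: itbr br F M',
      (* (ii) *)
      forall (M' : q.+1.-tuple 'I_d) (N : q.+2.-tuple 'I_d),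
        br (itbr br E M') (itbr br F N)
        = a q.+2 *: \sum_(M1 : 'I_d) P q.+2 (cons_tuple M1 M') N *: F M1
    & (* (iii) *)
      forall (M N : q.+2.-tuple 'I_d),
        br (itbr br E M) (itbr br F N)
        = a q.+2 *: \sum_(K : q.+2.-tuple 'I_d) P q.+2 M K *:
            \sum_(i < q.+2)
              (\prod_(j < q.+2 | j != i) (tnth K j == tnth N j)%:R) *:
                br (E (tnth K i)) (F (tnth N i))].
Proof.
have HL : graded_lie_superalgebra G br by case: HU.
have Hinv : invariant_form G br form by case: Hform.
have Hspan : forall v, Sg G br v.
  case: HU => _ Hdeg _ [Hgen _] _; apply: Hgen.
  - split; first by apply: (@Sgood _ _ G br 0) => //; exact: (G0 HL).
    by move=> c x y Sx Sy; apply: Sadd => //; apply: Ssc.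
  - move=> I; case: Hdeg => He0 Hf0 Hoth Hh.
    have [I0|In0] := eqVneq (val I) 0%N.
      have -> : I = ord0 by apply: val_inj.
      split.
      + by apply: (@Sgood _ _ G br (-1)) => // _; apply: W1.
      + by apply: (@Sgood _ _ G br 1).
      + by apply: (@Sgood _ _ G br 0).
    have [He Hf] := Hoth I In0.
    split; [exact: (@Sgood _ _ G br 0) | exact: (@Sgood _ _ G br 0)|].
    exact: (@Sgood _ _ G br 0).
  - by move=> x y; apply: Sg_br.
have Hrad : forall v, (forall y, form y v = 0) -> v = 0.
  case: HU => _ _ _ _ Hmax v Hv.
  apply: (Hmax (fun v => forall y, form y v = 0)) => //.
    split; first split.
    - by move=> y; rewrite (linR0 (formr Hinv y)).
    - by move=> c x z Hx Hz y; rewrite (formr Hinv y) Hx Hz mulr0 add0r.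
    - by move=> x z Hz y; rewrite -(form_inv Hinv); apply: Hz.
  move=> w Hw [c Ew].
  suff c0 : forall I, c I = 0.
    by rewrite Ew big1 // => I _; rewrite c0 scale0r.
  apply: (cart_nondeg Hn) => J.
  have := Hw (h J); rewrite Ew (linR_sum (formr Hinv _)) => H0; rewrite -[RHS]H0.
  apply: eq_bigr => I _; rewrite (linRZ (formr Hinv _)).
  by case: Hform => _ -> _ _ _; rewrite cartanA_sym.
split.
- by move=> M N; apply: (part1 HL Hinv Hspan HE HF HEF Hrad HP Ha1 Ha).
- by move=> M' N; apply: (part2 HL Hinv HE HF HEF Ha).
- by move=> M N; apply: (part3 HL Hinv HE HF HEF Hrad Ha).
Qed.
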